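(* Let $\mathsf{K}$ be a congruence permutable variety. Then $\mathsf{K}$ has the weak ES property if and only if no finitely generated finitely subdirectly irreducible member of $\mathsf{K}$ has a subalgebra that is fully epic in $\mathsf{K}$.
   Context: A variety is a class of similar algebras closed under homomorphic images, subalgebras and direct products. It is congruence permutable if $\theta_1\circ\theta_2=\theta_2\circ\theta_1$ for all congruences $\theta_1,\theta_2$ of every member. $\mathsf{K}$ has the weak ES property if every $\mathsf{K}$-epimorphism (homomorphism $f\colon\mathbf{A}\to\mathbf{B}$ in $\mathsf{K}$ with $g\circ f=h\circ f\Rightarrow g=h$ for all homomorphisms $g,h$ from $\mathbf{B}$ to members of $\mathsf{K}$) between finitely generated members is surjective. An algebra is finitely subdirectly irreducible (FSI) if it is nontrivial and for every subdirect embedding into a finite product some projection is an isomorphism (equivalently, the identity congruence is meet irreducible in its congruence lattice). $\mathbf{A}\leq\mathbf{B}$ is epic in $\mathsf{K}$ if the inclusion is a $\mathsf{K}$-epimorphism; it is full in $\mathsf{K}$ if it is proper, almost total ($B=\mathrm{Sg}^{\mathbf{B}}(A\cup\{b\})$ for some $b$), and every congruence $\theta\neq\mathrm{id}_B$ of $\mathbf{B}$ relates each $b\in B$ to some $a\in A$; fully epic means full and epic. *)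

(* Defs.v *)
From Stdlib Require Import List.
From mathcomp Require Import all_boot.

Set Implicit Arguments.
Unset Strict Implicit.
Unset Printing Implicit Defensive.

Record signature := Signature {
  op_sym : Type;
  arity : op_sym -> nat
}.

Record algebra (S : signature) := Algebra {
  carrier :> Type;
  interp : forall f : op_sym S, ('I_(arity f) -> carrier) -> carrier
}.

Arguments interp {S} c f _ : rename.

Section UA.
Variable S : signature.

Definition is_hom (A B : algebra S) (h : A -> B) : Prop :=
  forall (f : op_sym S) (a : 'I_(arity f) -> A),
    h (interp _ f a) = interp _ f (fun i => h (a i)).

Definition prod_alg (I : Type) (A : I -> algebra S) : algebra S :=
  @Algebra S (forall i, A i)
    (fun f a => fun i => interp _ f (fun j => a j i)).

Definition subuniverse (A : algebra S) (P : A -> Prop) : Prop :=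
  forall (f : op_sym S) (a : 'I_(arity f) -> A),
    (forall i, P (a i)) -> P (interp _ f a).

Definition Sg (A : algebra S) (X : A -> Prop) : A -> Prop :=
  fun a => forall P, subuniverse P -> (forall x, X x -> P x) -> P a.

Definition fin_generated (A : algebra S) : Prop :=
  exists l : list A, forall a : A, Sg (fun x => In x l) a.

Definition congruence (A : algebra S) (th : A -> A -> Prop) : Prop :=
  (forall x, th x x) /\ (forall x y, th x y -> th y x) /\
  (forall x y z, th x y -> th y z -> th x z) /\
  (forall (f : op_sym S) (a b : 'I_(arity f) -> A),
      (forall i, th (a i) (b i)) -> th (interp _ f a) (interp _ f b)).

Definition FSI (A : algebra S) : Prop :=
  (exists x y : A, x <> y) /\
  forall th1 th2 : A -> A -> Prop, congruence th1 -> congruence th2 ->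
    (forall x y, th1 x y -> th2 x y -> x = y) ->
    (forall x y, th1 x y -> x = y) \/ (forall x y, th2 x y -> x = y).

Definition closed_H (K : algebra S -> Prop) : Prop :=
  forall (A B : algebra S) (h : A -> B),
    K A -> is_hom h -> (forall b, exists a, h a = b) -> K B.

Definition closed_S (K : algebra S -> Prop) : Prop :=
  forall (A B : algebra S) (h : A -> B),
    K B -> inhabited A -> is_hom h -> (forall x y, h x = h y -> x = y) -> K A.

Definition closed_P (K : algebra S -> Prop) : Prop :=
  forall (I : Type) (A : I -> algebra S),
    (forall i, K (A i)) -> K (prod_alg A).

Definition variety (K : algebra S -> Prop) : Prop :=
  (forall A, K A -> inhabited A) /\ closed_H K /\ closed_S K /\ closed_P K.

Definition cong_permutable (K : algebra S -> Prop) : Prop :=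
  forall A : algebra S, K A ->
  forall th1 th2 : A -> A -> Prop, congruence th1 -> congruence th2 ->
  forall x y, (exists z, th1 x z /\ th2 z y) <-> (exists z, th2 x z /\ th1 z y).

Definition K_epi (K : algebra S -> Prop) (A B : algebra S) (f : A -> B) : Prop :=
  K A /\ K B /\ is_hom f /\
  forall (C : algebra S) (g h : B -> C), K C -> is_hom g -> is_hom h ->
    (forall a, g (f a) = h (f a)) -> forall b, g b = h b.

Definition weak_ES (K : algebra S -> Prop) : Prop :=
  forall (A B : algebra S) (f : A -> B),
    fin_generated A -> fin_generated B -> K_epi K f ->
    forall b, exists a, f a = b.

Definition subalgebra (B : algebra S) (P : B -> Prop) : Prop :=
  subuniverse P /\ exists a, P a.

(* The inclusion of the subalgebra P into B is a K-epimorphism. *)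
Definition epic_in (K : algebra S -> Prop) (B : algebra S) (P : B -> Prop) : Prop :=
  forall (C : algebra S) (g h : B -> C), K C -> is_hom g -> is_hom h ->
    (forall a, P a -> g a = h a) -> forall b, g b = h b.

Definition full_in (K : algebra S -> Prop) (B : algebra S) (P : B -> Prop) : Prop :=
  (exists b, ~ P b) /\
  (exists b, forall c, Sg (fun x => P x \/ x = b) c) /\
  forall th : B -> B -> Prop, congruence th ->
    (exists x y, th x y /\ x <> y) ->
    forall b, exists a, P a /\ th b a.

Definition fully_epic_in (K : algebra S -> Prop) (B : algebra S) (P : B -> Prop) : Prop :=
  full_in K P /\ epic_in K P.

End UA.

(* Main.v *)
Require Import Defs.
From mathcomp Require Import all_boot.
From mathcomp Require classical_sets.
From Stdlib Require Import List Classical ClassicalEpsilon ProofIrrelevance FunctionalExtensionality PropExtensionality.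
Set Implicit Arguments.
Unset Strict Implicit.

Lemma Sg_incl {S} (A : algebra S) (X : A -> Prop) x : X x -> Sg X x.
Proof. intros Hx P _ HP; exact (HP x Hx). Qed.

Lemma Sg_sub {S} (A : algebra S) (X : A -> Prop) : subuniverse (Sg X).
Proof. intros f a Ha P HP HX. apply HP. intros i; apply (Ha i P HP HX). Qed.

Lemma Sg_min {S} (A : algebra S) (X P : A -> Prop) :
  subuniverse P -> (forall x, X x -> P x) -> forall x, Sg X x -> P x.
Proof. intros HP HX x Hx; exact (Hx P HP HX). Qed.

Lemma Sg_mono {S} (A : algebra S) (X Y : A -> Prop) :
  (forall x, X x -> Y x) -> forall x, Sg X x -> Sg Y x.
Proof.
intros HXY. apply Sg_min. apply Sg_sub. intros x Hx; apply Sg_incl; auto.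
Qed.

Lemma Sg_hom {S} (A B : algebra S) (h : A -> B) (X : A -> Prop) :
  is_hom h -> forall a, Sg X a -> Sg (fun y => exists x, X x /\ h x = y) (h a).
Proof.
intros Hh. apply (Sg_min (P := fun a => Sg (fun y => exists x, X x /\ h x = y) (h a))).
- intros f a Ha. rewrite Hh. apply Sg_sub. exact Ha.
- intros x Hx. apply Sg_incl. exists x; auto.
Qed.

Lemma eq_sub {S} (A B : algebra S) (g h : A -> B) :
  is_hom g -> is_hom h -> subuniverse (fun x => g x = h x).
Proof.
intros Hg Hh f a Ha. rewrite Hg Hh. f_equal. apply functional_extensionality. exact Ha.
Qed.

Lemma sig_eq {T} (P : T -> Prop) (u v : {x | P x}) : proj1_sig u = proj1_sig v -> u = v.
Proof.
destruct u as [x hx], v as [y hy]; simpl; intros ->. f_equal. apply proof_irrelevance.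
Qed.

Definition sub_alg {S} (B : algebra S) (P : B -> Prop) (hP : subuniverse P) : algebra S :=
  @Algebra S {x : B | P x}
    (fun f a => exist _ (interp B f (fun i => proj1_sig (a i)))
                       (hP f _ (fun i => proj2_sig (a i)))).

Lemma sub_val_hom {S} (B : algebra S) (P : B -> Prop) (hP : subuniverse P) :
  @is_hom S (sub_alg hP) B (@proj1_sig _ _).
Proof. intros f a; reflexivity. Qed.

Lemma sub_in_K {S} (K : algebra S -> Prop) (B : algebra S) (P : B -> Prop) (hP : subuniverse P) :
  variety K -> K B -> (exists a, P a) -> K (sub_alg hP).
Proof.
intros [_ [_ [HS _]]] HB [a Ha].
apply (HS (sub_alg hP) B (@proj1_sig _ _) HB).
- constructor. exact (exist _ a Ha).
- apply sub_val_hom.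
- intros x y; apply sig_eq.
Qed.

Definition qcar {S} (B : algebra S) (th : B -> B -> Prop) : Type :=
  {Q : B -> Prop | exists x, Q = th x}.

Definition qcls {S} (B : algebra S) (th : B -> B -> Prop) (x : B) : qcar th :=
  exist (fun Q => exists y, Q = th y) (th x) (ex_intro (fun y => th x = th y) x erefl).

Definition qrep {S} (B : algebra S) (th : B -> B -> Prop) (c : qcar th) : B :=
  proj1_sig (constructive_indefinite_description _ (proj2_sig c)).

Lemma qrep_spec {S} (B : algebra S) (th : B -> B -> Prop) (c : qcar th) :
  proj1_sig c = th (qrep c).
Proof. unfold qrep. destruct (constructive_indefinite_description _ _); simpl; auto. Qed.

Lemma qcls_rep {S} (B : algebra S) (th : B -> B -> Prop) (c : qcar th) : qcls th (qrep c) = c.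
Proof. apply sig_eq. simpl. symmetry. apply qrep_spec. Qed.

Lemma qcls_eq {S} (B : algebra S) (th : B -> B -> Prop) :
  congruence th -> forall x y, th x y -> qcls th x = qcls th y.
Proof.
intros [Hr [Hs [Ht _]]] x y Hxy. apply sig_eq; simpl.
apply functional_extensionality; intros z. apply propositional_extensionality; split; eauto.
Qed.

Lemma qcls_inj {S} (B : algebra S) (th : B -> B -> Prop) :
  congruence th -> forall x y, qcls th x = qcls th y -> th x y.
Proof.
intros [Hr _] x y E. apply (f_equal (@proj1_sig _ _)) in E. simpl in E.
rewrite E. apply Hr.
Qed.

Definition quot_alg {S} (B : algebra S) (th : B -> B -> Prop) : algebra S :=
  @Algebra S (qcar th) (fun f a => qcls th (interp B f (fun i => qrep (a i)))).

Lemma qcls_hom {S} (B : algebra S) (th : B -> B -> Prop) :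
  congruence th -> @is_hom S B (quot_alg th) (qcls th).
Proof.
intros Hc f a. simpl. apply qcls_eq; auto.
destruct Hc as [Hr [Hs [Ht Hf]]]. apply Hf. intros i.
apply qcls_inj; [split; auto|]. rewrite qcls_rep. reflexivity.
Qed.

Lemma qcls_surj {S} (B : algebra S) (th : B -> B -> Prop) (c : quot_alg th) :
  exists x, qcls th x = c.
Proof. exists (qrep c). apply qcls_rep. Qed.

Lemma quot_in_K {S} (K : algebra S -> Prop) (B : algebra S) (th : B -> B -> Prop) :
  variety K -> K B -> congruence th -> K (quot_alg th).
Proof.
intros [_ [HH _]] HB Hc. apply (HH B (quot_alg th) (qcls th) HB (qcls_hom Hc) (@qcls_surj _ _ th)).
Qed.

Lemma hom_comp {S} (A B C : algebra S) (g : A -> B) (h : B -> C) :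
  is_hom g -> is_hom h -> is_hom (fun x => h (g x)).
Proof. intros Hg Hh f a. rewrite Hg Hh. reflexivity. Qed.

Lemma In_enum (T : finType) (x : T) : List.In x (enum T).
Proof.
have : x \in enum T by rewrite mem_enum.
elim: (enum T) => [|y s IH] //. move=> /predU1P [->|H]; simpl; [left|right]; auto.
Qed.

Lemma cover_lists {X : Type} n (w : 'I_n -> list X) :
  exists l, forall i z, In z (w i) -> In z l.
Proof.
exists (concat (List.map w (enum 'I_n))). intros i z Hz.
apply in_concat. exists (w i). split; auto. apply in_map. apply In_enum.
Qed.

Definition epic_at {S} (K : algebra S -> Prop) (B : algebra S) (P : B -> Prop) (b : B) : Prop :=
  forall (C : algebra S) (g h : B -> C), K C -> is_hom g -> is_hom h ->
    (forall a, P a -> g a = h a) -> g b = h b.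

Lemma dom_finitary {S} (K : algebra S -> Prop) (B : algebra S) (P : B -> Prop) (b : B) :
  variety K -> epic_at K P b ->
  exists l : list B, (forall x, In x l -> P x) /\ epic_at K (Sg (fun x => In x l)) b.
Proof.
intros HK Hb. apply NNPP. intros Hno.
pose I := {l : list B | forall x, In x l -> P x}.
assert (W : forall i : I, exists t : {C : algebra S & ((B -> C) * (B -> C))%type},
   K (projT1 t) /\ is_hom (fst (projT2 t)) /\ is_hom (snd (projT2 t)) /\
   (forall a, Sg (fun x => In x (proj1_sig i)) a -> fst (projT2 t) a = snd (projT2 t) a) /\
   fst (projT2 t) b <> snd (projT2 t) b).
{ intros [l Hl]. simpl. apply NNPP; intros Hn. apply Hno. exists l. split; auto.
  intros C g h HC Hg Hh Hgh. apply NNPP; intros Hne. apply Hn.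
  exists (existT _ C (g, h)). simpl. auto 6. }
pose t := fun i => proj1_sig (constructive_indefinite_description _ (W i)).
assert (Ht : forall i, K (projT1 (t i)) /\ is_hom (fst (projT2 (t i))) /\ is_hom (snd (projT2 (t i))) /\
   (forall a, Sg (fun x => In x (proj1_sig i)) a -> fst (projT2 (t i)) a = snd (projT2 (t i)) a) /\
   fst (projT2 (t i)) b <> snd (projT2 (t i)) b).
{ intros i. unfold t. destruct (constructive_indefinite_description _ _); auto. }
pose Cs := fun i => projT1 (t i).
pose Pr := prod_alg Cs.
assert (HPr : K Pr).
{ destruct HK as [_ [_ [_ HP]]]. apply HP. intros i; apply Ht. }
pose rho := fun (x y : Pr) => exists l0 : I, forall l : I,
   (forall z, In z (proj1_sig l0) -> In z (proj1_sig l)) -> x l = y l.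
pose nilI := exist (fun l : list B => forall x, In x l -> P x) nil (fun x (H : In x nil) => match H with end).
assert (Happ : forall l1 l2 : I, exists l3 : I, forall z, (In z (proj1_sig l1) \/ In z (proj1_sig l2)) -> In z (proj1_sig l3)).
{ intros [l1 h1] [l2 h2]. simpl.
  assert (h3 : forall x, In x (l1 ++ l2) -> P x).
  { intros x Hx. apply in_app_or in Hx. destruct Hx; auto. }
  exists (exist _ (l1 ++ l2) h3). simpl. intros z Hz. apply in_or_app. auto. }
assert (Hrho : congruence rho).
{ split; [|split; [|split]].
  - intros x. exists nilI. auto.
  - intros x y [l0 H]. exists l0. intros l Hl. symmetry; auto.
  - intros x y z [l1 H1] [l2 H2]. destruct (Happ l1 l2) as [l3 H3]. exists l3.
    intros l Hl. transitivity (y l).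
    + apply H1. intros w Hw; apply Hl, H3; auto.
    + apply H2. intros w Hw; apply Hl, H3; auto.
  - intros f a c Hac.
    assert (Hw : forall i : 'I_(arity f), exists l0 : I, forall l : I,
       (forall z, In z (proj1_sig l0) -> In z (proj1_sig l)) -> a i l = c i l) by exact Hac.
    pose w := fun i => proj1_sig (constructive_indefinite_description _ (Hw i)).
    assert (Hw' : forall i l, (forall z, In z (proj1_sig (w i)) -> In z (proj1_sig l)) -> a i l = c i l).
    { intros i. unfold w. destruct (constructive_indefinite_description _ _); auto. }
    assert (HwP : forall i x, In x (proj1_sig (w i)) -> P x) by (intros i; exact (proj2_sig (w i))).
    pose L' := concat (List.map (fun i => proj1_sig (w i)) (enum 'I_(arity f))).
    assert (HL'P : forall x, In x L' -> P x).
    { intros x Hx. apply in_concat in Hx. destruct Hx as [m [Hm Hx]].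
      apply in_map_iff in Hm. destruct Hm as [i [<- _]]. eauto. }
    exists (exist _ L' HL'P). intros l Hl. simpl. f_equal.
    apply functional_extensionality; intros i. apply Hw'. intros z Hz. apply Hl. simpl.
    apply in_concat. exists (proj1_sig (w i)). split; auto.
    apply (in_map (fun j => proj1_sig (w j))). apply In_enum. }
pose G := fun (x : B) => (fun i => fst (projT2 (t i)) x) : Pr.
pose H := fun (x : B) => (fun i => snd (projT2 (t i)) x) : Pr.
assert (HG : is_hom G).
{ intros f a. unfold G. apply functional_extensionality_dep; intros i.
  destruct (Ht i) as [_ [Hg _]]. rewrite Hg. reflexivity. }
assert (HH : is_hom H).
{ intros f a. unfold H. apply functional_extensionality_dep; intros i.
  destruct (Ht i) as [_ [_ [Hh _]]]. rewrite Hh. reflexivity. }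
assert (E : qcls rho (G b) = qcls rho (H b)).
{ apply (Hb (quot_alg rho) (fun x => qcls rho (G x)) (fun x => qcls rho (H x))).
  - apply quot_in_K; auto.
  - apply hom_comp; auto. apply qcls_hom; auto.
  - apply hom_comp; auto. apply qcls_hom; auto.
  - intros a Ha. apply qcls_eq; auto.
    assert (h1 : forall x, In x (a :: nil) -> P x).
    { intros x [<-|[]]; auto. }
    exists (exist _ (a :: nil) h1). intros l Hl. simpl in Hl.
    unfold G, H. apply (Ht l). apply Sg_incl. apply Hl. left; auto. }
apply qcls_inj in E; auto. destruct E as [l0 E].
apply (Ht l0). apply (E l0). auto.
Qed.

Lemma sub_fg {S} (B : algebra S) (L : list B) (p0 : B) (hp0 : Sg (fun x => In x L) p0) :
  fin_generated (sub_alg (@Sg_sub _ _ (fun x => In x L))).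
Proof.
pose A := sub_alg (@Sg_sub _ _ (fun x => In x L)).
pose to_A := fun x : B => match excluded_middle_informative (Sg (fun y => In y L) x) with
   | left h => (exist _ x h : A) | right _ => (exist _ p0 hp0 : A) end.
exists (List.map to_A L). intros a Q HQ HL.
pose Q' := fun x : B => exists h : Sg (fun y => In y L) x, Q (exist _ x h).
assert (HQ' : subuniverse Q').
{ intros f a' Ha.
  assert (hs : forall i, Sg (fun y => In y L) (a' i)) by (intros i; destruct (Ha i); auto).
  exists (@Sg_sub _ _ (fun y => In y L) f a' hs).
  assert (E : (exist _ (interp B f a') (@Sg_sub _ _ (fun y => In y L) f a' hs) : A) =
              interp A f (fun i => exist _ (a' i) (hs i))) by (apply sig_eq; reflexivity).
  rewrite E. apply HQ. intros i. destruct (Ha i) as [h Hh].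
  replace (hs i) with h by apply proof_irrelevance. exact Hh. }
assert (HLQ : forall x, In x L -> Q' x).
{ intros x Hx. exists (Sg_incl Hx).
  assert (E : to_A x = exist _ x (Sg_incl Hx)).
  { apply sig_eq. unfold to_A. destruct (excluded_middle_informative _) as [h|n]; simpl; auto.
    exfalso; apply n; apply Sg_incl; auto. }
  rewrite <- E. apply HL. apply in_map. auto. }
destruct a as [x hx].
destruct (Sg_min HQ' HLQ hx) as [h Hh].
replace hx with h by apply proof_irrelevance. exact Hh.
Qed.

Lemma forward {S} (K : algebra S -> Prop) :
  variety K -> weak_ES K -> forall B : algebra S, K B -> fin_generated B ->
  forall P : B -> Prop, subalgebra P -> (exists b, ~ P b) -> epic_in K P -> False.
Proof.
intros HK HW B HB [X HX] P [hP [p0 Hp0]] [bn Hbn] Hep.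
assert (Hlx : forall x : B, exists l : list B, (forall y, In y l -> P y) /\ epic_at K (Sg (fun y => In y l)) x).
{ intros x. apply dom_finitary; auto. intros C g h HC Hg Hh Hgh. apply (Hep C g h); auto. }
pose lx := fun x => proj1_sig (constructive_indefinite_description _ (Hlx x)).
assert (Hlx' : forall x, (forall y, In y (lx x) -> P y) /\ epic_at K (Sg (fun y => In y (lx x))) x).
{ intros x. unfold lx. destruct (constructive_indefinite_description _ _); auto. }
pose L := p0 :: concat (List.map lx X).
assert (HLP : forall y, In y L -> P y).
{ intros y [<-|Hy]; auto. apply in_concat in Hy. destruct Hy as [m [Hm Hy]].
  apply in_map_iff in Hm. destruct Hm as [x [<- _]]. apply (Hlx' x); auto. }
assert (HSgP : forall y, Sg (fun y => In y L) y -> P y) by (apply Sg_min; auto).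
assert (Hp0L : Sg (fun y => In y L) p0) by (apply Sg_incl; left; auto).
assert (Hepi : forall (C : algebra S) (g h : B -> C), K C -> is_hom g -> is_hom h ->
   (forall a, Sg (fun y => In y L) a -> g a = h a) -> forall b, g b = h b).
{ intros C g h HC Hg Hh Hgh b. apply (@Sg_min _ _ (fun y => In y X) _ (eq_sub Hg Hh)); [|apply HX].
  intros x Hx. apply (Hlx' x); auto. intros a Ha. apply Hgh.
  revert a Ha. apply Sg_mono. intros y Hy. right. apply in_concat. exists (lx x); split; auto.
  apply in_map; auto. }
pose A := sub_alg (@Sg_sub _ _ (fun x => In x L)).
assert (HA : K A) by (apply sub_in_K; eauto).
assert (Hsurj : forall b, exists a : A, proj1_sig a = b).
{ apply (HW A B (@proj1_sig _ _)).
  - apply (sub_fg Hp0L).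
  - exists X; auto.
  - split; [auto|split; [auto|split]].
    + apply sub_val_hom.
    + intros C g h HC Hg Hh Hgh. apply (Hepi C g h HC Hg Hh).
      intros a Ha. exact (Hgh (exist _ a Ha)). }
destruct (Hsurj bn) as [[a ha] Ea]. simpl in Ea. subst. apply Hbn, HSgP; auto.
Qed.

Lemma key {S} (K : algebra S -> Prop) (B : algebra S) (P : B -> Prop) (hP : subuniverse P)
  (psi1 psi2 : B -> B -> Prop) :
  variety K -> cong_permutable K -> K B -> (exists a, P a) -> epic_in K P ->
  congruence psi1 -> congruence psi2 ->
  (forall x y, psi1 x y -> psi2 x y -> x = y) ->
  (forall x, exists p, P p /\ psi1 x p) -> (forall x, exists p, P p /\ psi2 x p) ->
  forall x, P x.
Proof.
intros HK HCP HB Hne Hep H1 H2 Hmeet F1 F2.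
pose (C1 := H1). pose (C2 := H2).
destruct H1 as [r1 [s1 [t1 c1]]]. destruct H2 as [r2 [s2 [t2 c2]]].
pose Bs := sub_alg hP.
assert (HBs : K Bs) by (apply sub_in_K; auto).
assert (Hc1 : congruence (fun u v : Bs => psi1 (proj1_sig u) (proj1_sig v))).
{ split; [|split; [|split]]; simpl; eauto; intros f a b Hab; apply c1; auto. }
assert (Hc2 : congruence (fun u v : Bs => psi2 (proj1_sig u) (proj1_sig v))).
{ split; [|split; [|split]]; simpl; eauto; intros f a b Hab; apply c2; auto. }
assert (Hperm : forall p q, P p -> P q -> (exists r, P r /\ psi2 p r /\ psi1 r q) ->
                  exists r, P r /\ psi1 p r /\ psi2 r q).
{ intros p q Hp Hq [r [Hr [E1 E2]]].
  destruct (proj2 (HCP Bs HBs _ _ Hc1 Hc2 (exist _ p Hp) (exist _ q Hq))) as [[z hz] [E3 E4]].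
  - exists (exist _ r Hr). simpl. auto.
  - exists z. simpl in *. auto. }
pose lam := fun p q => exists r, P r /\ psi1 p r /\ psi2 r q.
assert (lam_sym : forall p q, P p -> P q -> lam p q -> lam q p).
{ intros p q Hp Hq [r [Hr [E1 E2]]]. apply Hperm; auto. exists r; auto. }
assert (lam_trans : forall p q s, P p -> P q -> P s -> lam p q -> lam q s -> lam p s).
{ intros p q s Hp Hq Hs [r [Hr [E1 E2]]] [r' [Hr' [E3 E4]]].
  destruct (Hperm r r' Hr Hr') as [z [Hz [E5 E6]]]. exists q; auto.
  exists z. split; [auto|split; eauto]. }
assert (lam_refl1 : forall p q, P q -> psi1 p q -> lam p q).
{ intros p q Hq E. exists q; auto. }
assert (lam_refl2 : forall p q, P p -> psi2 p q -> lam p q).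
{ intros p q Hp E. exists p; auto. }
pose nu := fun x y => exists p q, P p /\ P q /\ psi1 x p /\ psi1 y q /\ lam p q.
assert (Hnu : congruence nu).
{ split; [|split; [|split]].
  - intros x. destruct (F1 x) as [p [Hp E]]. exists p, p. repeat split; auto.
  - intros x y [p [q [Hp [Hq [E1 [E2 E3]]]]]]. exists q, p. split; [auto|split; [auto|split; [auto|split; [auto|]]]]. apply lam_sym; auto.
  - intros x y z [p [q [Hp [Hq [E1 [E2 E3]]]]]] [q' [s [Hq' [Hs [E4 [E5 E6]]]]]].
    exists p, s. split; [auto|split; [auto|split; [auto|split; [auto|]]]].
    apply (lam_trans p q s); auto. apply (lam_trans q q' s); auto.
    apply lam_refl1; auto. apply (t1 _ y); auto.
  - intros f a b Hab.
    assert (W : forall i, exists t : B * B * B, P t.1.1 /\ P t.1.2 /\ P t.2 /\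
       psi1 (a i) t.1.1 /\ psi1 (b i) t.1.2 /\ psi1 t.1.1 t.2 /\ psi2 t.2 t.1.2).
    { intros i. destruct (Hab i) as [p [q [Hp [Hq [E1 [E2 [r [Hr [E3 E4]]]]]]]]].
      exists (p, q, r). simpl. auto 10. }
    pose t := fun i => proj1_sig (constructive_indefinite_description _ (W i)).
    assert (Ht : forall i, P (t i).1.1 /\ P (t i).1.2 /\ P (t i).2 /\
       psi1 (a i) (t i).1.1 /\ psi1 (b i) (t i).1.2 /\ psi1 (t i).1.1 (t i).2 /\ psi2 (t i).2 (t i).1.2).
    { intros i. unfold t. destruct (constructive_indefinite_description _ _); auto. }
    exists (interp B f (fun i => (t i).1.1)), (interp B f (fun i => (t i).1.2)).
    repeat split.
    + apply hP. intros i; apply Ht.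
    + apply hP. intros i; apply Ht.
    + apply c1. intros i; apply Ht.
    + apply c1. intros i; apply Ht.
    + exists (interp B f (fun i => (t i).2)). repeat split.
      * apply hP. intros i; apply Ht.
      * apply c1. intros i; apply Ht.
      * apply c2. intros i; apply Ht. }
assert (Hwd : forall x y p p', psi2 x y -> P p -> P p' -> psi2 x p -> psi2 y p' -> nu p p').
{ intros x y p p' E Hp Hp' E1 E2. exists p, p'. repeat split; auto.
  apply lam_refl2; auto. eauto. }
pose rep2 := fun x => proj1_sig (constructive_indefinite_description _ (F2 x)).
assert (Hrep2 : forall x, P (rep2 x) /\ psi2 x (rep2 x)).
{ intros x. unfold rep2. destruct (constructive_indefinite_description _ _); auto. }
pose g := (qcls nu : B -> quot_alg nu).
pose h := (fun x => qcls nu (rep2 x)) : B -> quot_alg nu.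
assert (Hh : @is_hom S B (quot_alg nu) h).
{ intros f a. unfold h. rewrite <- (qcls_hom Hnu). apply qcls_eq; auto.
  apply (Hwd (interp B f a) (interp B f a)); auto.
  - apply Hrep2.
  - apply hP. intros i; apply Hrep2.
  - apply Hrep2.
  - apply c2. intros i; apply Hrep2. }
assert (E : forall x, g x = h x).
{ apply (Hep (quot_alg nu) g h).
  - apply quot_in_K; auto.
  - apply qcls_hom; auto.
  - exact Hh.
  - intros p Hp. unfold g, h. apply qcls_eq; auto.
    apply (Hwd p p); auto; apply Hrep2. }
intros x. specialize (E x). unfold g, h in E. apply qcls_inj in E; auto.
destruct (Hrep2 x) as [Hp2 Ex2].
destruct E as [p [q [Hp [Hq [E1 [E2 E3]]]]]].
assert (L : lam p (rep2 x)).
{ apply (lam_trans p q (rep2 x)); auto; apply lam_refl1; auto. }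
destruct L as [r [Hr [E4 E5]]].
rewrite (Hmeet x r); eauto.
Qed.

Lemma sat_all {S} (B : algebra S) (th : B -> B -> Prop) (P X : B -> Prop) :
  congruence th -> subuniverse P -> (forall x, X x -> exists p, P p /\ th x p) ->
  forall b, Sg X b -> exists p, P p /\ th b p.
Proof.
intros [r [s [t c]]] hP HX. apply Sg_min; auto.
intros f a Ha.
pose ps := fun i => proj1_sig (constructive_indefinite_description _ (Ha i)).
assert (Hps : forall i, P (ps i) /\ th (a i) (ps i)).
{ intros i; unfold ps; destruct (constructive_indefinite_description _ _); auto. }
exists (interp B f ps). split.
- apply hP. intros i; apply Hps.
- apply c. intros i; apply Hps.
Qed.

Lemma reduce {S} (B : algebra S) (l : list B) : forall P : B -> Prop,
  subuniverse P -> (exists b, ~ P b) -> (forall b, Sg (fun y => P y \/ In y l) b) ->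
  exists P' : B -> Prop, subuniverse P' /\ (forall y, P y -> P' y) /\ (exists b, ~ P' b) /\
    exists x, forall b, Sg (fun y => P' y \/ y = x) b.
Proof.
induction l as [|x l IH]; intros P hP [bn Hbn] Hall.
- exfalso. apply Hbn. apply (Sg_min hP (X := fun y => P y \/ In y nil)); auto.
  intros y [Hy|[]]; auto.
- destruct (classic (forall b, Sg (fun y => P y \/ y = x) b)) as [Hx|Hx].
  + exists P. split; auto. split; auto. split; eauto.
  + destruct (IH (Sg (fun y => P y \/ y = x))) as [P' [hP' [H1 [H2 H3]]]].
    * apply Sg_sub.
    * apply not_all_ex_not in Hx. exact Hx.
    * intros b. apply (Sg_mono (X := fun y => P y \/ In y (x :: l))); auto.
      intros y [Hy|[Hy|Hy]].
      -- left. apply Sg_incl. auto.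
      -- left. apply Sg_incl. auto.
      -- right; auto.
    * exists P'. split; auto. split; auto. intros y Hy. apply H1. apply Sg_incl. auto.
Qed.

Lemma cong_ext {S} (B : algebra S) (th th' : B -> B -> Prop) :
  (forall x y, th x y <-> th' x y) -> congruence th -> congruence th'.
Proof.
intros E [r [s [t c]]]. split; [|split; [|split]].
- intros; apply E; auto.
- intros x y H; apply E; apply E in H; auto.
- intros x y z H1 H2; apply E; apply E in H1; apply E in H2; eauto.
- intros f a b H. apply E. apply c. intros i; apply E; auto.
Qed.

Lemma notall_neg {T} (P : T -> Prop) (th : T -> T -> Prop) :
  ~ (exists z, forall p, P p -> ~ th z p) -> forall z, exists p, P p /\ th z p.
Proof.
intros H z. apply NNPP. intros H2. apply H. exists z. intros p Hp Hth. apply H2. eauto.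
Qed.

Lemma nontriv_ex {T} (th : T -> T -> Prop) :
  ~ (forall x y, th x y -> x = y) -> exists x y, th x y /\ x <> y.
Proof.
intros H. apply NNPP. intros H2. apply H. intros x y Hxy. apply NNPP. intros Hne. apply H2. eauto.
Qed.

Lemma max_cong {S} (B : algebra S) (P1 : B -> Prop) (X : list B) :
  subuniverse P1 -> (exists b, ~ P1 b) -> (forall b, Sg (fun y => In y X) b) ->
  exists th : B -> B -> Prop, congruence th /\ (exists z, forall p, P1 p -> ~ th z p) /\
   forall th', congruence th' -> (forall x y, th x y -> th' x y) ->
     (exists z, forall p, P1 p -> ~ th' z p) -> forall x y, th' x y -> th x y.
Proof.
intros hP1 [bn Hbn] HX.
pose ER := fun (R : (B * B)%type -> Prop) (x y : B) => x = y \/ R (x, y).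
pose NotAll := fun th : B -> B -> Prop => exists z, forall p, P1 p -> ~ th z p.
pose Pset := fun R => congruence (ER R) /\ NotAll (ER R).
assert (Hempty : Pset (fun _ => False)).
{ split.
  - split; [|split; [|split]]; unfold ER.
    + auto.
    + intros x y [->|[]]; auto.
    + intros x y z [->|[]] [->|[]]; auto.
    + intros f a b Hab. left. f_equal. apply functional_extensionality. intros i.
      destruct (Hab i) as [->|[]]; auto.
  - exists bn. intros p Hp [->|[]]; auto. }
destruct (@classical_sets.Zorn_bigcup (B * B)%type Pset) as [Rm [HRm Hmax]].
{ intros F HFP Htot.
  pose U := fun pr => exists2 R, F R & R pr.
  change (Pset U).
  pose ok := fun R => F R \/ (forall pr, ~ R pr).
  assert (okP : forall R, ok R -> Pset R).
  { intros R [HR|HR]. exact (HFP R HR).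
    assert (E : R = fun _ => False).
    { apply functional_extensionality; intros pr. apply propositional_extensionality. split; [apply HR | intros []]. }
    rewrite E; auto. }
  assert (okU : forall R x y, ok R -> ER R x y -> ER U x y).
  { intros R x y [HR|HR] [E|E]; unfold ER; auto.
    - right. exists R; auto.
    - exfalso; eapply HR; eauto. }
  assert (comb : forall R1 R2, ok R1 -> ok R2 -> exists R, ok R /\ (forall pr, R1 pr -> R pr) /\ (forall pr, R2 pr -> R pr)).
  { intros R1 R2 [H1|H1] [H2|H2].
    - destruct (Htot R1 R2 H1 H2) as [E|E].
      + exists R2. split; [left; auto|split; auto].
      + exists R1. split; [left; auto|split; auto].
    - exists R1. split; [left; auto|split; auto]. intros pr Hpr; exfalso; eapply H2; eauto.
    - exists R2. split; [left; auto|split; auto]. intros pr Hpr; exfalso; eapply H1; eauto.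
    - exists R1. split; [right; auto|split; auto]. intros pr Hpr; exfalso; eapply H2; eauto. }
  assert (Hlist : forall l : list (B * B)%type, (forall pr, In pr l -> ER U pr.1 pr.2) ->
            exists R, ok R /\ forall pr, In pr l -> ER R pr.1 pr.2).
  { induction l as [|pr l IH]; intros Hl.
    - exists (fun _ => False). split; [right; auto|]. intros pr [].
    - destruct IH as [R [HR HRl]]. { intros pr' Hpr'. apply Hl. right; auto. }
      destruct (Hl pr (or_introl erefl)) as [E|[R' HR' HR'pr]].
      + exists R. split; auto. intros pr' [<-|Hpr']; auto. left; auto.
      + destruct (comb R R') as [R'' [H1 [H2 H3]]]; auto. { left; auto. }
        exists R''. split; auto. intros pr' [<-|Hpr'].
        * right. apply H3. destruct pr; auto.
        * destruct (HRl pr' Hpr') as [E|E]; [left|right]; auto. }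
  assert (HcU : congruence (ER U)).
  { split; [|split; [|split]].
    - intros x; left; auto.
    - intros x y Hxy. destruct (Hlist ((x, y) :: nil)) as [R [HR HRl]].
      { intros pr [<-|[]]; auto. }
      apply (okU R); auto. apply (okP R HR). apply (HRl (x, y)); left; auto.
    - intros x y z Hxy Hyz. destruct (Hlist ((x, y) :: (y, z) :: nil)) as [R [HR HRl]].
      { intros pr [<-|[<-|[]]]; auto. }
      apply (okU R); auto. destruct (okP R HR) as [[_ [_ [Ht _]]] _].
      apply (Ht x y z); [apply (HRl (x, y))|apply (HRl (y, z))]; simpl; auto.
    - intros f a b Hab.
      destruct (Hlist (List.map (fun i => (a i, b i)) (enum 'I_(arity f)))) as [R [HR HRl]].
      { intros pr Hpr. apply in_map_iff in Hpr. destruct Hpr as [i [<- _]]. apply Hab. }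
      apply (okU R); auto. destruct (okP R HR) as [[_ [_ [_ Hc]]] _].
      apply Hc. intros i. apply (HRl (a i, b i)).
      apply (in_map (fun i => (a i, b i))). apply In_enum. }
  split; auto.
  apply NNPP. intros Hn. pose proof (notall_neg Hn) as Hall.
  pose px := fun x => proj1_sig (constructive_indefinite_description _ (Hall x)).
  assert (Hpx : forall x, P1 (px x) /\ ER U x (px x)).
  { intros x. unfold px. destruct (constructive_indefinite_description _ _); auto. }
  destruct (Hlist (List.map (fun x => (x, px x)) X)) as [R [HR HRl]].
  { intros pr Hpr. apply in_map_iff in Hpr. destruct Hpr as [x [<- _]]. apply Hpx. }
  destruct (okP R HR) as [HcR [z Hz]].
  destruct (sat_all (X := fun y => In y X) HcR hP1) with (b := z) as [p [Hp Hzp]].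
  - intros x Hx. exists (px x). split. apply Hpx. apply (HRl (x, px x)).
    apply (in_map (fun x => (x, px x))). auto.
  - apply HX.
  - eapply Hz; eauto. }
destruct HRm as [Hc Hna].
exists (ER Rm). split; auto. split; auto.
intros th' Hc' Hsub Hna' x y Hxy. apply NNPP. intros Hn.
apply (Hmax (fun pr => th' pr.1 pr.2)).
- split.
  + intros [u v] Huv. simpl. apply Hsub. right; auto.
  + intros Hsub2. apply Hn. right. apply (Hsub2 (x, y)). simpl; auto.
- split.
  + apply (cong_ext (th := th')); auto. intros u v. unfold ER. simpl. split; auto.
    intros [->|?]; auto. destruct Hc' as [r _]; auto.
  + destruct Hna' as [z Hz]. exists z. intros p Hp [->|Hh]; simpl in *.
    * destruct Hc' as [r _]. eapply Hz; eauto.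
    * eapply Hz; eauto.
Qed.

Lemma backward {S} (K : algebra S -> Prop) :
  variety K -> cong_permutable K ->
  ~ (exists B : algebra S, K B /\ fin_generated B /\ FSI B /\
        exists P : B -> Prop, subalgebra P /\ fully_epic_in K P) ->
  weak_ES K.
Proof.
intros HK HCP Hno A B f HfgA [X HX] [HA [HB [Hf Hepi]]] b0.
apply NNPP; intros Hb0.
pose P0 := fun y => exists a, f a = y.
assert (hP0 : subuniverse P0).
{ intros o a Ha. pose xs := fun i => proj1_sig (constructive_indefinite_description _ (Ha i)).
  exists (interp A o xs). rewrite Hf. f_equal. apply functional_extensionality. intros i.
  unfold xs. destruct (constructive_indefinite_description _ _); auto. }
assert (Hne0 : exists a, P0 a).
{ destruct HK as [Hinh _]. destruct (Hinh A HA) as [a]. exists (f a), a; auto. }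
assert (Hprop0 : exists b, ~ P0 b). { exists b0. intros [a Ha]. apply Hb0. eauto. }
destruct (@reduce _ _ X P0 hP0 Hprop0) as [P1 [hP1 [HP01 [Hprop1 [x1 Hx1]]]]].
{ intros b. apply (Sg_mono (X := fun y => In y X)); auto. }
destruct (max_cong hP1 Hprop1 HX) as [th [Hth [[z Hz] Hmax]]].
pose B' := quot_alg th.
pose q := (qcls th : B -> B').
assert (Hq : is_hom q) by (apply qcls_hom; auto).
assert (Hqs : forall c : B', exists x, q x = c) by (apply qcls_surj).
pose P' := fun c : B' => exists p, P1 p /\ q p = c.
assert (hP' : subuniverse P').
{ intros o a Ha. pose ps := fun i => proj1_sig (constructive_indefinite_description _ (Ha i)).
  assert (Hps : forall i, P1 (ps i) /\ q (ps i) = a i).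
  { intros i; unfold ps; destruct (constructive_indefinite_description _ _); auto. }
  exists (interp B o ps). split. apply hP1. intros i; apply Hps.
  rewrite Hq. f_equal. apply functional_extensionality. intros i; apply Hps. }
destruct Hne0 as [p0 Hp0]. pose proof (HP01 _ Hp0) as Hp01.
assert (HzP' : ~ P' (q z)).
{ intros [p [Hp E]]. apply (Hz p Hp). apply qcls_inj in E; auto.
  destruct Hth as [_ [Hs _]]; auto. }
assert (HKB' : K B') by (apply quot_in_K; auto).
assert (Hep' : epic_in K P').
{ intros C g h HC Hg Hh Hgh c. destruct (Hqs c) as [x <-].
  apply (Hepi C (fun y => g (q y)) (fun y => h (q y))); auto.
  - apply hom_comp; auto.
  - apply hom_comp; auto.
  - intros a. apply Hgh. exists (f a). split; auto. apply HP01. exists a; auto. }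
assert (Hfull : forall psi : B' -> B' -> Prop, congruence psi -> (exists x y, psi x y /\ x <> y) ->
           forall c, exists a, P' a /\ psi c a).
{ intros psi Hpsi [c [d [Hcd Hne]]].
  pose th' := fun x y => psi (q x) (q y).
  assert (Hth' : congruence th').
  { destruct Hpsi as [r [s [t cc]]]. split; [|split; [|split]]; unfold th'; eauto.
    intros o a b Hab. rewrite !Hq. apply cc. auto. }
  assert (Hsub : forall x y, th x y -> th' x y).
  { intros x y Hxy. unfold th', q. rewrite (qcls_eq Hth Hxy). destruct Hpsi as [r _]; auto. }
  assert (HnN : ~ (exists z, forall p, P1 p -> ~ th' z p)).
  { intros HN. destruct (Hqs c) as [x <-]. destruct (Hqs d) as [y <-].
    apply Hne. apply qcls_eq; auto. apply (Hmax th'); auto. }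
  pose proof (notall_neg HnN) as Hall. clear HnN.
  intros c'. destruct (Hqs c') as [x <-]. destruct (Hall x) as [p [Hp E]].
  exists (q p). split; auto. exists p; auto. }
apply Hno. exists B'. split; auto. split.
{ exists (List.map q X). intros c. destruct (Hqs c) as [x <-].
  apply (Sg_mono (X := fun y => exists x, In x X /\ q x = y)).
  - intros y [x' [Hx' <-]]. apply in_map; auto.
  - apply Sg_hom; auto. }
split.
{ split.
  - exists (q z), (q p0). intros E. apply HzP'. exists p0; auto.
  - intros psi1 psi2 Hc1 Hc2 Hm.
    destruct (classic (forall x y, psi1 x y -> x = y)) as [H1|H1]; [left; auto|].
    destruct (classic (forall x y, psi2 x y -> x = y)) as [H2|H2]; [right; auto|].
    exfalso. apply HzP'.
    apply (key (K := K) hP' (psi1 := psi1) (psi2 := psi2)); auto.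
    + exists (q p0), p0; auto.
    + apply Hfull; auto. apply nontriv_ex; auto.
    + apply Hfull; auto. apply nontriv_ex; auto. }
exists P'. split.
{ split; auto. exists (q p0), p0; auto. }
split; auto.
split; [exists (q z); auto|].
split.
- exists (q x1). intros c. destruct (Hqs c) as [x <-].
  apply (Sg_mono (X := fun y => exists x, (P1 x \/ x = x1) /\ q x = y)).
  + intros y [x' [[Hx' | -> ] <-]]; [left; exists x'; auto|right; auto].
  + apply Sg_hom; auto.
- intros psi Hpsi Hnt b. apply Hfull; auto.
Qed.

Unset Implicit Arguments.

Theorem mainTheorem11 (S : signature) (K : algebra S -> Prop) :
  variety K -> cong_permutable K ->
  (weak_ES K <->
   ~ (exists B : algebra S, K B /\ fin_generated B /\ FSI B /\
        exists P : B -> Prop, subalgebra P /\ fully_epic_in K P)).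
Proof.
intros HK HCP. split.
- intros HW [B [HB [Hfg [_ [P [HsubP [[Hprop _] Hepic]]]]]]].
  exact (forward HK HW HB Hfg HsubP Hprop Hepic).
- apply backward; auto.
Qed.
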